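(* Let $(X,\gamma)$ and $(Y,\nu)$ be probability spaces. Let $(E_i)_{i\ge1}$ be pairwise independent measurable subsets of $X$ and $(F_i)_{i\ge1}$ pairwise independent measurable subsets of $Y$ such that $\gamma(E_i)=\nu(F_i)$ for all $i$ and $\sum_{i=1}^\infty\gamma(E_i)=\infty$. Then for all measurable $E\subseteq X$, $F\subseteq Y$ and every $\varepsilon>0$ there exists a positive integer $i$ such that both $\gamma(E\cap E_i)>(\gamma(E)-\varepsilon)\gamma(E_i)$ and $\nu(F\cap F_i)>(\nu(F)-\varepsilon)\nu(F_i)$. *)

(* Defs.v *)
From HB Require Import structures.
From mathcomp Require Import all_boot all_order all_algebra.
From mathcomp Require Import all_classical all_reals all_analysis.
Set Implicit Arguments. Unset Strict Implicit. Unset Printing Implicit Defensive.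
Import Order.TTheory GRing.Theory Num.Theory.
Local Open Scope classical_set_scope.
Local Open Scope ereal_scope.

Definition pairwise_indep_pos {d} {T : measurableType d} {R : realType}
  (P : probability T R) (A : nat -> set T) : Prop :=
  forall i j : nat, (0 < i)%N -> (0 < j)%N -> i != j ->
    P (A i `&` A j) = P (A i) * P (A j).

(* Main.v *)
Require Import Defs.
From HB Require Import structures.
From mathcomp Require Import all_boot all_order all_algebra.
From mathcomp Require Import all_classical all_reals all_analysis.
From mathcomp Require Import lra.
Import Order.TTheory GRing.Theory Num.Theory.
Local Open Scope classical_set_scope.
Local Open Scope ring_scope.

Section S.
Context {d} {T : measurableType d} {R : realType} (P : probability T R).
Local Open Scope ereal_scope.

Lemma indic_Lfun2 (A : set T) : measurable A -> (\1_A : T -> R) \in Lfun P 2%:E.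
Proof.
move=> mA; rewrite inE/=; apply/andP; split; rewrite inE/=.
  exact: measurable_realfun.measurable_indic.
rewrite /finite_norm unlock poweR_lty//.
under eq_integral => x _.
  rewrite (_ : `|(EFin \o \1_A) x| `^ 2 = (\1_A x)%:E); last first.
    by rewrite /= /indic; case: (x \in A); rewrite /= ?normr0 ?normr1 ?poweR_EFin ?powR0 ?powR1.
  over.
by rewrite integral_indic// setIT ltey_eq fin_num_measure.
Qed.

Lemma Lfun_sum (s : seq nat) (f : nat -> T -> R) :
  (forall i, i \in s -> f i \in Lfun P 2%:E) -> (\sum_(i <- s) f i)%R \in Lfun P 2%:E.
Proof.
move=> H; rewrite big_seq; have p1 : (1 <= 2%:E :> \bar R) by rewrite lee1n.
apply: (@rpred_sum _ (Lfun P 2%:E)) => i; exact: H.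
Qed.

Lemma cov_sum_l (s : seq nat) (f : nat -> T -> R) Y :
  (forall i, i \in s -> f i \in Lfun P 2%:E) -> Y \in Lfun P 2%:E ->
  covariance P (\sum_(i <- s) f i)%R Y = \sum_(i <- s) covariance P (f i) Y.
Proof.
move=> + HY; elim: s => [|i s IH] Hf.
  by rewrite !big_nil; exact: (covariance_cst_l P 0 Y).
rewrite !big_cons -IH; last by move=> j js; apply: Hf; rewrite inE js orbT.
apply: covarianceDl => //; first by apply: Hf; rewrite mem_head.
by apply: Lfun_sum => j js; apply: Hf; rewrite inE js orbT.
Qed.

Definition pr (A : set T) : R := fine (P A).

Lemma prE A : measurable A -> P A = (pr A)%:E.
Proof. by move=> mA; rewrite /pr fineK// fin_num_measure. Qed.

Lemma cov_indic A B : measurable A -> measurable B ->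
  covariance P (\1_A) (\1_B) = (pr (A `&` B) - pr A * pr B)%:E.
Proof.
move=> mA mB.
have Pfin : P setT \is a fin_num := fin_num_measure P _ measurableT.
rewrite covarianceE; last 3 first.
- exact/(Lfun_subset12 Pfin)/indic_Lfun2.
- exact/(Lfun_subset12 Pfin)/indic_Lfun2.
- by apply: Lfun2_mul_Lfun1; apply: indic_Lfun2.
have -> : (\1_A * \1_B)%R = \1_(A `&` B) :> (T -> R) by rewrite indicI.
rewrite !expectation_indic ?prE//; exact: measurableI.
Qed.

Lemma key (E : set T) (E_ : nat -> set T) (s : seq nat) :
 measurable E -> (forall i, i \in s -> measurable (E_ i)) -> uniq s ->
 (forall i j, i \in s -> j \in s -> i != j -> P (E_ i `&` E_ j) = P (E_ i) * P (E_ j)) ->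
 forall t : R, (0 <= t ^+ 2 * (pr E - pr E * pr E)
   + \sum_(i <- s) (pr (E_ i) - pr (E_ i) * pr (E_ i))
   + 2 * (t * \sum_(i <- s) (pr (E_ i `&` E) - pr (E_ i) * pr E)))%R.
Proof.
move=> mE mE_ us indep t.
have p1 : (1 <= 2%:E :> \bar R) by rewrite lee1n.
have Pfin : P setT \is a fin_num := fin_num_measure P _ measurableT.
pose h : T -> R := (\sum_(i <- s) (\1_(E_ i) : T -> R))%R.
have hL : h \in Lfun P 2%:E.
  by apply: Lfun_sum => i /mE_; apply: indic_Lfun2.
have EL := @indic_Lfun2 _ mE.
have := variance_ge0 P (t \o* \1_E \+ h)%R.
rewrite varianceD; last 2 first.
- by apply: Lfun_scale => //; rewrite ler1n.
- exact: hL.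
rewrite varianceZ // covarianceZl; last 3 first.
- exact: Lfun_subset12.
- exact: Lfun_subset12.
- exact: Lfun2_mul_Lfun1.
have VE : 'V_P[\1_E] = (pr E - pr E * pr E)%:E.
  by rewrite /variance cov_indic // setIid.
have C : covariance P (\1_E) h = (\sum_(i <- s) (pr (E_ i `&` E) - pr (E_ i) * pr E))%:E.
  rewrite covarianceC /h cov_sum_l; last 2 first.
  - by move=> i /mE_; apply: indic_Lfun2.
  - exact: EL.
  rewrite -sumEFin big_seq [RHS]big_seq; apply: eq_bigr => i /mE_ mi.
  by rewrite cov_indic.
have VH : 'V_P[h] = (\sum_(i <- s) (pr (E_ i) - pr (E_ i) * pr (E_ i)))%:E.
  rewrite /variance {1}/h cov_sum_l; last 2 first.
  - by move=> i /mE_; apply: indic_Lfun2.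
  - exact: hL.
  rewrite -sumEFin big_seq [RHS]big_seq; apply: eq_bigr => i is_.
  rewrite covarianceC /h cov_sum_l; last 2 first.
  - by move=> j /mE_; apply: indic_Lfun2.
  - by apply: indic_Lfun2; apply: mE_.
  have mi := mE_ _ is_.
  rewrite (bigD1_seq i) //= (@cov_indic _ _ mi mi) setIid big_seq_cond big1 ?adde0 //.
  move=> j /andP[js ji]; rewrite (@cov_indic _ _ (mE_ _ js) mi).
  have mj := mE_ _ js.
  by rewrite /pr (indep j i) // fineM ?subrr // fin_num_measure.
rewrite VE VH C -!EFinM.
by rewrite -!EFinD lee_fin.
Qed.

Lemma pr_ge0 A : (0 <= pr A)%R.
Proof. by rewrite /pr fine_ge0. Qed.

Lemma pr_le1 A : measurable A -> (pr A <= 1)%R.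
Proof. by move=> mA; rewrite -lee_fin -prE // probability_le1. Qed.

Lemma bound (E : set T) (E_ : nat -> set T) (s : seq nat) (eps : R) :
 measurable E -> (forall i, i \in s -> measurable (E_ i)) -> uniq s ->
 (forall i j, i \in s -> j \in s -> i != j -> P (E_ i `&` E_ j) = P (E_ i) * P (E_ j)) ->
 (0 < eps)%R ->
 (forall i, i \in s -> pr (E `&` E_ i) - pr E * pr (E_ i) <= - eps * pr (E_ i))%R ->
 (eps ^+ 2 * \sum_(i <- s) pr (E_ i) <= 1)%R.
Proof.
move=> mE mE_ us indep eps0 H.
set S := (\sum_(i <- s) pr (E_ i))%R.
have S0 : (0 <= S)%R by apply: sumr_ge0 => i _; apply: pr_ge0.
have V2 : (\sum_(i <- s) (pr (E_ i) - pr (E_ i) * pr (E_ i)) <= S)%R.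
  rewrite /S; apply: ler_sum => i _.
  by rewrite lerBlDr lerDl mulr_ge0 ?pr_ge0.
have C : (\sum_(i <- s) (pr (E_ i `&` E) - pr (E_ i) * pr E) <= - eps * S)%R.
  rewrite /S mulr_sumr big_seq [X in (_ <= X)%R]big_seq; apply: ler_sum => i is_.
  by rewrite setIC mulrC; apply: H.
have V1 : (pr E - pr E * pr E <= 1)%R.
  have := @pr_le1 _ mE; have := pr_ge0 E; nra.
have V1' : (0 <= pr E - pr E * pr E)%R.
  have := @pr_le1 _ mE; have := pr_ge0 E; nra.
have K := @key _ _ _ mE mE_ us indep (eps * S).
have Q : (eps ^+ 2 * S ^+ 2 <= S)%R.
  move: K V1 V1' V2 C.
  set a := (pr E - pr E * pr E)%R.
  set b := (\sum_(i <- s) (pr (E_ i) - pr (E_ i) * pr (E_ i)))%R.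
  set c := (\sum_(i <- s) (pr (E_ i `&` E) - pr (E_ i) * pr E))%R.
  move=> K V1 V1' V2 C.
  have e2 : (0 <= eps * S)%R by rewrite mulr_ge0 // ltW.
  have : ((eps * S) ^+ 2 * a <= (eps * S) ^+ 2)%R.
    by rewrite ler_piMr // sqr_ge0.
  have : (2 * ((eps * S) * c) <= 2 * ((eps * S) * (- eps * S)))%R.
    by rewrite ler_pM2l // ler_wpM2l.
  nra.
have [->|Spos] := eqVneq S 0%R; first by rewrite mulr0.
have Sp : (0 < S)%R by rewrite lt_def Spos S0.
move: Q; rewrite !expr2 => Q.
have : (eps * eps * S * S <= 1 * S)%R by rewrite mul1r -mulrA.
by rewrite ler_pM2r.
Qed.

End S.

Theorem mainTheorem12 (R : realType)
  (dX : measure_display) (X : measurableType dX) (gamma : probability X R)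
  (dY : measure_display) (Y : measurableType dY) (nu : probability Y R)
  (E_ : nat -> set X) (F_ : nat -> set Y)
  (mE : forall i, (0 < i)%N -> measurable (E_ i))
  (mF : forall i, (0 < i)%N -> measurable (F_ i))
  (iE : pairwise_indep_pos gamma E_)
  (iF : pairwise_indep_pos nu F_)
  (eqEF : forall i, (0 < i)%N -> gamma (E_ i) = nu (F_ i))
  (div : (\sum_(1 <= i <oo) gamma (E_ i))%E = +oo%E) :
  forall (E : set X) (F : set Y), measurable E -> measurable F ->
  forall eps : R, 0 < eps ->
  exists i : nat, (0 < i)%N /\
    ((gamma E - eps%:E) * gamma (E_ i) < gamma (E `&` E_ i))%E /\
    ((nu F - eps%:E) * nu (F_ i) < nu (F `&` F_ i))%E.
Proof.
move=> E F mEE mFF eps eps0.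
pose M : R := 2 / eps ^+ 2.
have [N HN] : exists N, (M%:E < \sum_(1 <= i < N) gamma (E_ i))%E.
  apply/not_existsP => hN.
  have : (\sum_(1 <= i <oo) gamma (E_ i) <= M%:E)%E.
    apply: lime_le; first by apply: is_cvg_nneseries.
    by apply: nearW => n; rewrite leNgt; apply/negP; apply: hN.
  by rewrite div leNgt ltry.
apply/not_existsP => H.
pose px i := (pr gamma (E `&` E_ i) - pr gamma E * pr gamma (E_ i) <= - eps * pr gamma (E_ i)).
pose qy i := (pr nu (F `&` F_ i) - pr nu F * pr nu (F_ i) <= - eps * pr nu (F_ i)).
have Hi : forall i, (0 < i)%N -> ~~ px i -> qy i.
  move=> i i0 npx; apply/negP => nqy; apply: (H i); split => //.
  have mi := mE i i0; have mFi := mF i i0.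
  move: npx nqy; rewrite /px /qy /= -!ltNge => npx nqy.
  rewrite !prE //; try exact: measurableI.
  rewrite -!EFinB -!EFinM !lte_fin; split; nra.
set s := index_iota 1 N.
have spos : forall i, i \in s -> (0 < i)%N.
  by move=> i; rewrite mem_index_iota => /andP[].
have HS : M < \sum_(i <- s) pr gamma (E_ i).
  rewrite -lte_fin -sumEFin big_seq.
  under eq_bigr => i /spos i0 do rewrite -(@prE _ _ _ gamma _ (mE i i0)).
  by rewrite -big_seq.
have us : uniq s by apply: iota_uniq.
have HS' : M < \sum_(i <- seq.filter px s) pr gamma (E_ i) + \sum_(i <- seq.filter (predC px) s) pr gamma (E_ i).
  rewrite !big_filter; move: HS; rewrite (bigID px) /= => h; exact: h.
have B1 : eps ^+ 2 * \sum_(i <- seq.filter px s) pr gamma (E_ i) <= 1.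
  apply: (@bound _ _ _ gamma E E_ _ eps mEE) => //.
  - by move=> i; rewrite mem_filter => /andP[_ /spos]; apply: mE.
  - exact: filter_uniq.
  - move=> i j; rewrite !mem_filter => /andP[_ /spos i0] /andP[_ /spos j0] ij.
    exact: iE.
  - by move=> i; rewrite mem_filter => /andP[].
have B2 : eps ^+ 2 * \sum_(i <- seq.filter (predC px) s) pr nu (F_ i) <= 1.
  apply: (@bound _ _ _ nu F F_ _ eps mFF) => //.
  - by move=> i; rewrite mem_filter => /andP[_ /spos]; apply: mF.
  - exact: filter_uniq.
  - move=> i j; rewrite !mem_filter => /andP[_ /spos i0] /andP[_ /spos j0] ij.
    exact: iF.
  - by move=> i; rewrite mem_filter => /andP[/= npx /spos i0]; apply: Hi.
have E2 : \sum_(i <- seq.filter (predC px) s) pr nu (F_ i) =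
          \sum_(i <- seq.filter (predC px) s) pr gamma (E_ i).
  rewrite big_seq [RHS]big_seq; apply: eq_bigr => i.
  by rewrite mem_filter => /andP[_ /spos i0]; rewrite /pr eqEF.
rewrite E2 in B2.
have eM : eps ^+ 2 * M = 2 by rewrite /M mulrC -mulrA mulVf ?mulr1 // expf_neq0 // gt_eqF.
have e2 : 0 < eps ^+ 2 by rewrite exprn_gt0.
have := HS'; rewrite -(ltr_pM2l e2) eM mulrDr => H2.
have := lerD B1 B2; rewrite -[1 + 1]/(2%:R) => H3.
by have := lt_le_trans H2 H3; rewrite ltxx.
Qed.
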